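(* Let $K$ be a field of characteristic zero, $R=K[x,y,z]$ with the standard grading, and let $a,b,c,\beta,\gamma$ be integers with $a\geq c\geq 2$, $1\leq \beta\leq b-1$ and $\max\{1,b-a+1\}\leq \gamma\leq \min\{b-1,c-1\}$. Consider the ideal $$I=(x^a,\ y^b-x^{b-\gamma}z^\gamma,\ z^c,\ x^{a-b+\gamma}y^{b-\beta},\ y^{b-\beta}z^{c-\gamma})\subset R.$$ If one of $a,b,c$ is equal to two, then $R/I$ has the weak Lefschetz property.
   Context: A graded Artinian $K$-algebra $A=\bigoplus_i [A]_i$ has the weak Lefschetz property (WLP) if there exists a linear form $L\in[A]_1$ such that the multiplication map $\times L:[A]_i\to[A]_{i+1}$ has maximal rank (i.e. is injective or surjective) for every $i$. *)

(* Defs.v *)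
From HB Require Import structures.
From mathcomp Require Import all_boot all_order all_algebra.
From mathcomp Require Import mpoly.
Set Implicit Arguments. Unset Strict Implicit. Unset Printing Implicit Defensive.
Import GRing.Theory.
Local Open Scope ring_scope.

Section Graded.
Variable K : fieldType.
Notation R := {mpoly K[3]}.

(* p lies in [R]_d : p is homogeneous of total degree d (0 is in every [R]_d) *)
Definition homogd (d : nat) (p : R) : bool := p \is d.-homog.

Definition in_ideal (k : nat) (gens : 'I_k -> R) (f : R) : Prop :=
  exists g : 'I_k -> R, f = \sum_(i < k) g i * gens i.

(* A = R / I with I = (gens) homogeneous; [A]_d = [R]_d / ([R]_d ∩ I).
   Multiplication by (the class of) L from [A]_d to [A]_(d+1):
   injective  : for f in [R]_d, L f in I implies f in I;
   surjective : every h in [R]_(d+1) is L f modulo I for some f in [R]_d. *)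
Definition mult_injective (k : nat) (gens : 'I_k -> R) (L : R) (d : nat) : Prop :=
  forall f : R, homogd d f -> in_ideal gens (L * f) -> in_ideal gens f.

Definition mult_surjective (k : nat) (gens : 'I_k -> R) (L : R) (d : nat) : Prop :=
  forall h : R, homogd d.+1 h ->
    exists2 f : R, homogd d f & in_ideal gens (h - L * f).

Definition quotient_artinian (k : nat) (gens : 'I_k -> R) : Prop :=
  exists N : nat, forall d : nat, (N <= d)%N ->
    forall f : R, homogd d f -> in_ideal gens f.

Definition hasWLP (k : nat) (gens : 'I_k -> R) : Prop :=
  quotient_artinian gens /\
  exists L : R, homogd 1 L /\
    forall i : nat, mult_injective gens L i \/ mult_surjective gens L i.

End Graded.

Definition xv {K : fieldType} : {mpoly K[3]} := 'X_(0 : 'I_3).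
Definition yv {K : fieldType} : {mpoly K[3]} := 'X_(1 : 'I_3).
Definition zv {K : fieldType} : {mpoly K[3]} := 'X_(2 : 'I_3).

Definition gensI (K : fieldType) (a b c beta gamma : nat) : 'I_5 -> {mpoly K[3]} :=
  fun i =>
    match val i with
    | 0 => xv ^+ a
    | 1 => yv ^+ b - xv ^+ (b - gamma) * zv ^+ gamma
    | 2 => zv ^+ c
    | 3 => xv ^+ (a + gamma - b) * yv ^+ (b - beta)
    | _ => yv ^+ (b - beta) * zv ^+ (c - gamma)
    end.

(* Main.v *)
Require Import Defs.
From HB Require Import structures.
From mathcomp Require Import all_boot all_order all_algebra.
From mathcomp Require Import mpoly.
From mathcomp Require Import zify ring.
From Stdlib Require Import Classical.
Set Implicit Arguments. Unset Strict Implicit. Unset Printing Implicit Defensive.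
Import GRing.Theory.
Local Open Scope ring_scope.

Section Basic.
Variable K : fieldType.
Local Notation R := {mpoly K[3]}.

Definition i0 : 'I_3 := @Ordinal 3 0 isT.
Definition i1 : 'I_3 := @Ordinal 3 1 isT.
Definition i2 : 'I_3 := @Ordinal 3 2 isT.

Definition mk_def (i j k : nat) : 'X_{1..3} := (U_(i0) *+ i + U_(i1) *+ j + U_(i2) *+ k)%MM.
Fact mk_key : unit. Proof. exact: tt. Qed.
Definition mk := locked_with mk_key mk_def.
Lemma mk_unlock i j k : mk i j k = (U_(i0) *+ i + U_(i1) *+ j + U_(i2) *+ k)%MM.
Proof. by rewrite /mk unlock. Qed.

Lemma mkc0 i j k : mk i j k i0 = i.
Proof. by rewrite !mk_unlock !mnmDE !mulmnE !mnm1E /=; lia. Qed.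
Lemma mkc1 i j k : mk i j k i1 = j.
Proof. by rewrite !mk_unlock !mnmDE !mulmnE !mnm1E /=; lia. Qed.
Lemma mkc2 i j k : mk i j k i2 = k.
Proof. by rewrite !mk_unlock !mnmDE !mulmnE !mnm1E /=; lia. Qed.

Lemma mkE (m : 'X_{1..3}) : m = mk (m i0) (m i1) (m i2).
Proof.
apply/mnmP => l; rewrite !mk_unlock !mnmDE !mulmnE !mnm1E.
case: l => [[|[|[|l]]] Hl] //=; rewrite ?muln1 ?muln0 ?addn0 ?add0n //.
all: by rewrite mul1n; congr (m _); apply: val_inj.
Qed.

Lemma mdeg3 (m : 'X_{1..3}) : mdeg m = (m i0 + m i1 + m i2)%N.
Proof.
rewrite mdegE !big_ord_recr big_ord0 /= add0n.
by congr (_ + _ + _); congr (m _); apply: val_inj.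
Qed.

Lemma mdeg_mk i j k : mdeg (mk i j k) = (i + j + k)%N.
Proof. by rewrite mdeg3 mkc0 mkc1 mkc2. Qed.

Lemma mkD i j k i' j' k' : (mk i j k + mk i' j' k')%MM = mk (i+i') (j+j') (k+k').
Proof. apply/mnmP => l; rewrite !mk_unlock !mnmDE !mulmnE; lia. Qed.

Lemma Xmk i j k : 'X_[mk i j k] = (xv ^+ i * yv ^+ j * zv ^+ k : R).
Proof. by rewrite !mk_unlock !mpolyXD -!mpolyXn. Qed.



Definition wt (b : nat) (m : 'X_{1..3}) := (m i1 + b * m i2)%N.

Section Ideal.
Variables (n : nat) (gens : 'I_n -> R).
Local Notation I := (in_ideal gens).

Lemma in_ideal0 : I 0.
Proof. by exists (fun _ => 0); rewrite big1 // => i _; rewrite mul0r. Qed.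

Lemma in_idealD f g : I f -> I g -> I (f + g).
Proof.
move=> [u ->] [v ->]; exists (fun i => u i + v i).
by rewrite -big_split; apply: eq_bigr => i _; rewrite mulrDl.
Qed.

Lemma in_idealM r f : I f -> I (r * f).
Proof.
move=> [u ->]; exists (fun i => r * u i).
by rewrite mulr_sumr; apply: eq_bigr => i _; rewrite mulrA.
Qed.

Lemma in_idealN f : I f -> I (- f).
Proof. by move=> H; rewrite -mulN1r; apply: in_idealM. Qed.

Lemma in_idealB f g : I f -> I g -> I (f - g).
Proof. by move=> Hf Hg; apply: in_idealD => //; apply: in_idealN. Qed.

Lemma in_idealZ (c : K) f : I f -> I (c *: f).
Proof. by move=> H; rewrite -mul_mpolyC; apply: in_idealM. Qed.

Lemma in_ideal_gen i r : I (r * gens i).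
Proof.
exists (fun j => if j == i then r else 0).
rewrite (bigD1 i) //= eqxx big1 ?addr0 // => j /negbTE ->; by rewrite mul0r.
Qed.

Lemma in_ideal_sum (T : Type) (s : seq T) (F : T -> R) :
  (forall t, I (F t)) -> I (\sum_(t <- s) F t).
Proof.
move=> H; elim: s => [|t s IH]; first by rewrite big_nil; apply: in_ideal0.
by rewrite big_cons; apply: in_idealD.
Qed.

End Ideal.
End Basic.

Section Psi.
Variables (K : fieldType) (b : nat).
Local Notation R := {mpoly K[3]}.
Local Notation S := {poly {poly K}}.
Local Notation X m := ('X_[m] : R).

Definition hpsi (l : 'I_3) : S :=
  if val l == 0%N then 'X else if val l == 1%N then 'X * ('X)%:P else 'X * ('X^b)%:P.

Definition CC : {rmorphism K -> S} := (@polyC {poly K}) \o (@polyC K).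

Definition psi (p : R) : S := mmap CC hpsi p.

Lemma psiX m : psi (X m) = 'X^(mdeg m) * ('X^(wt b m))%:P.
Proof.
rewrite /psi mmapX /mmap1 !big_ord_recr big_ord0 /= mul1r mdeg3 /wt /hpsi /=.
have -> : widen_ord (leqnSn 2) (widen_ord (leqnSn 1) ord_max) = i0 by apply: val_inj.
have -> : widen_ord (leqnSn 2) ord_max = i1 by apply: val_inj.
have -> : (ord_max : 'I_3) = i2 by apply: val_inj.
rewrite !exprMn !exprD exprM !rmorphM !rmorphXn /=.
ring.
Qed.

Lemma psiM p q : psi (p * q) = psi p * psi q.
Proof. by rewrite /psi rmorphM. Qed.

Lemma psiB p q : psi (p - q) = psi p - psi q.
Proof. by rewrite /psi rmorphB. Qed.

Definition Lam (d w : nat) (p : R) : K := (psi p)`_d`_w.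

Lemma LamD d w p q : Lam d w (p + q) = Lam d w p + Lam d w q.
Proof. by rewrite /Lam /psi mmapD !coefD. Qed.

Lemma LamN d w p : Lam d w (- p) = - Lam d w p.
Proof. by rewrite /Lam /psi mmapN !coefN. Qed.

Lemma LamB d w p q : Lam d w (p - q) = Lam d w p - Lam d w q.
Proof. by rewrite LamD LamN. Qed.

Lemma LamZ d w (c : K) p : Lam d w (c *: p) = c * Lam d w p.
Proof. by rewrite /Lam /psi mmapZ /CC /= !coefCM. Qed.

Lemma Lam_sum d w (T : Type) (s : seq T) (F : T -> R) :
  Lam d w (\sum_(t <- s) F t) = \sum_(t <- s) Lam d w (F t).
Proof.
elim: s => [|t s IH]; first by rewrite !big_nil /Lam /psi mmap0 !coef0.
by rewrite !big_cons LamD IH.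
Qed.

Lemma LamX d w m : Lam d w (X m) = ((mdeg m == d) && (wt b m == w))%:R.
Proof.
rewrite /Lam psiX coefXnM; case: ltnP => H.
  by rewrite coef0 (_ : (mdeg m == d) = false) //; apply/negbTE; rewrite neq_ltn H orbT.
rewrite coefC; case: eqP => E.
  have -> : mdeg m == d by apply/eqP; lia.
  by rewrite /= coefXn eq_sym.
by rewrite (_ : (mdeg m == d) = false) /= ?coef0 //; apply/negbTE/eqP; lia.
Qed.

Lemma Lam_expand d w p :
  Lam d w p = \sum_(m <- msupp p) p@_m * ((mdeg m == d) && (wt b m == w))%:R.
Proof.
rewrite {1}(mpolyE p) Lam_sum; apply: eq_bigr => m _; by rewrite LamZ LamX.
Qed.

Lemma LamL d w p : Lam d.+1 w ((xv + yv) * p) =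
  Lam d w p + (if w is w'.+1 then Lam d w' p else 0).
Proof.
rewrite /Lam /psi rmorphM rmorphD /= /xv /yv !mmapX !mmap1U /hpsi /=.
set F := mmap _ _ p.
rewrite -[T in T + _]mulr1 -mulrDr -mulrA coefXM /= mulrDl mul1r coefD coefCM coefD coefXM.
by case: w.
Qed.

End Psi.

Section Params.
Variables (K : fieldType) (a b c beta : nat).
Hypotheses (b_gt0 : (0 < b)%N) (b_le : (b <= a + 1)%N) (c_gt0 : (0 < c)%N).
Local Notation R := {mpoly K[3]}.
Local Notation q := (b - beta)%N.
Local Notation gens := (gensI K a b c beta 1).
Local Notation I := (in_ideal gens).
Local Notation X m := ('X_[m] : R).

Definition std (i j k : nat) : bool :=
  [&& (i < a)%N, (j < b)%N, (k < c)%N, ~~ ((a + 1 - b <= i)%N && (q <= j)%N)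
    & ~~ ((q <= j)%N && (c - 1 <= k)%N)].
Definition stdm (m : 'X_{1..3}) := std (m i0) (m i1) (m i2).
Local Notation wt := (wt b).
Definition nf (m : 'X_{1..3}) :=
  mk (m i0 + (b - 1) * (m i1 %/ b)) (m i1 %% b) (m i2 + m i1 %/ b).

Lemma gensE0 : gens (@Ordinal 5 0 isT) = X (mk a 0 0).
Proof. by rewrite Xmk /gensI /= !expr0 !mulr1. Qed.
Lemma gensE1 : gens (@Ordinal 5 1 isT) = X (mk 0 b 0) - X (mk (b - 1) 0 1).
Proof. by rewrite !Xmk /gensI /= !expr0 !mulr1 !mul1r. Qed.
Lemma gensE2 : gens (@Ordinal 5 2 isT) = X (mk 0 0 c).
Proof. by rewrite Xmk /gensI /= !expr0 !mul1r. Qed.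
Lemma gensE3 : gens (@Ordinal 5 3 isT) = X (mk (a + 1 - b) q 0).
Proof. by rewrite Xmk /gensI /= !expr0 mulr1. Qed.
Lemma gensE4 : gens (@Ordinal 5 4 isT) = X (mk 0 q (c - 1)).
Proof. by rewrite Xmk /gensI /= !expr0 mul1r. Qed.

Lemma I_mult (e : 'X_{1..3}) (l : 'I_5) i j k :
  gens l = X e -> I (X (mk i j k + e)%MM).
Proof. by move=> He; rewrite mpolyXD -He; apply: in_ideal_gen. Qed.

Lemma nonstd_in i j k : (j < b)%N -> ~~ std i j k -> I (X (mk i j k)).
Proof.
move=> jb Hs.
have : (a <= i)%N \/ (c <= k)%N \/ ((a + 1 - b <= i)%N /\ (q <= j)%N)
        \/ ((q <= j)%N /\ (c - 1 <= k)%N) by move: Hs; rewrite /std jb /=; lia.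
case => [H|[H|[[H1 H2]|[H1 H2]]]].
- have -> : mk i j k = (mk (i - a) j k + mk a 0 0)%MM by rewrite mkD; congr mk; lia.
  exact: (I_mult _ _ _ gensE0).
- have -> : mk i j k = (mk i j (k - c) + mk 0 0 c)%MM by rewrite mkD; congr mk; lia.
  exact: (I_mult _ _ _ gensE2).
- have -> : mk i j k = (mk (i - (a + 1 - b)) (j - q) k + mk (a + 1 - b) q 0)%MM
    by rewrite mkD; congr mk; lia.
  exact: (I_mult _ _ _ gensE3).
- have -> : mk i j k = (mk i (j - q) (k - (c - 1)) + mk 0 q (c - 1))%MM
    by rewrite mkD; congr mk; lia.
  exact: (I_mult _ _ _ gensE4).
Qed.

Lemma binom_in i j k : I (X (mk i (j + b) k) - X (mk (i + (b - 1)) j (k + 1))).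
Proof.
have -> : X (mk i (j + b) k) - X (mk (i + (b - 1)) j (k + 1)) =
  X (mk i j k) * gens (@Ordinal 5 1 isT).
  by rewrite gensE1 mulrBr -!mpolyXD !mkD !addn0.
exact: in_ideal_gen.
Qed.

Lemma nf_step t : forall i j k,
  I (X (mk i (j + t * b) k) - X (mk (i + (b - 1) * t) j (k + t))).
Proof.
elim: t => [|t IH] i j k.
  by rewrite mul0n muln0 !addn0 subrr; apply: in_ideal0.
have -> : X (mk i (j + t.+1 * b) k) - X (mk (i + (b - 1) * t.+1) j (k + t.+1)) =
  (X (mk i ((j + b) + t * b) k) - X (mk (i + (b - 1) * t) (j + b) (k + t))) +
  (X (mk (i + (b - 1) * t) (j + b) (k + t)) - X (mk (i + (b - 1) * t + (b - 1)) j (k + t + 1))).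
  rewrite addrA subrK; congr (X (mk _ _ _) - X (mk _ _ _)); rewrite ?mulSn ?mulnS; lia.
by apply: in_idealD; [apply: IH | apply: binom_in].
Qed.

Lemma nf_red m : I (X m - X (nf m)).
Proof.
rewrite {1}[m]mkE {1}(divn_eq (m i1) b) addnC; exact: nf_step.
Qed.

Lemma mdeg_nf m : mdeg (nf m) = mdeg m.
Proof.
rewrite /nf mdeg_mk mdeg3 {3}(divn_eq (m i1) b).
have : (0 < b)%N := b_gt0. nia.
Qed.

Lemma wt_nf m : wt (nf m) = wt m.
Proof.
rewrite /wt /nf mkc1 mkc2 {3}(divn_eq (m i1) b). lia.
Qed.

Lemma nf_small m : (nf m i1 < b)%N.
Proof. by rewrite /nf mkc1 ltn_mod. Qed.

Lemma nf_id i j k : (j < b)%N -> nf (mk i j k) = mk i j k.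
Proof. by move=> jb; rewrite /nf mkc0 mkc1 mkc2 divn_small // modn_small // muln0 !addn0. Qed.

Lemma red_uniq (m m' : 'X_{1..3}) : (m i1 < b)%N -> (m' i1 < b)%N ->
  mdeg m = mdeg m' -> wt m = wt m' -> m = m'.
Proof.
move=> h h' Hd Hw.
have E1 : m i1 = m' i1.
  have : ((m i2 * b + m i1) %% b = (m' i2 * b + m' i1) %% b)%N.
    by move: Hw; rewrite /wt !(mulnC _ b) !(addnC (b * _)) => ->.
  by rewrite !modnMDl !modn_small.
have E2 : m i2 = m' i2.
  move: Hw; rewrite /wt E1 => /eqP; rewrite eqn_add2l eqn_mul2l; case/orP => /eqP //.
  by move=> b0; move: b_gt0; rewrite b0.
have E0 : m i0 = m' i0 by move: Hd; rewrite !mdeg3 E1 E2; lia.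
by rewrite [m]mkE [m']mkE E0 E1 E2.
Qed.

Lemma stdm_nf_add (m : 'X_{1..3}) e0 e1 e2 :
  stdm (nf (m + mk e0 e1 e2)%MM) =
  std (m i0 + e0 + (b - 1) * ((m i1 + e1) %/ b)) ((m i1 + e1) %% b)
      (m i2 + e2 + (m i1 + e1) %/ b).
Proof. by rewrite /stdm /nf !mkc0 !mkc1 !mkc2 !mnmDE !mkc0 !mkc1 !mkc2. Qed.

Lemma divmod_cases n : ((n %/ b = 0)%N /\ (n %% b = n)%N) \/ (1 <= n %/ b)%N.
Proof.
case E: (n %/ b)%N => [|t]; last by right.
left; split => //; move: (divn_eq n b); rewrite E mul0n add0n => <-. by [].
Qed.

Lemma nf_gen_nonstd (l : 'I_5) : val l != 1%N ->
  exists e0 e1 e2, gens l = X (mk e0 e1 e2) /\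
    forall m : 'X_{1..3}, ~~ stdm (nf (m + mk e0 e1 e2)%MM).
Proof.
case: l => [[|[|[|[|[|l]]]]] Hl] //= _.
- exists a, 0%N, 0%N; split; first exact: gensE0. move=> m.
  rewrite stdm_nf_add /std !addn0.
  set u := ((b - 1) * _)%N; set v := (_ %% b)%N; set w := (_ %/ b)%N.
  clearbody u v w; apply/negP; lia.
- exists 0%N, 0%N, c; split; first exact: gensE2. move=> m.
  rewrite stdm_nf_add /std !addn0.
  set u := ((b - 1) * _)%N; set v := (_ %% b)%N; set w := (_ %/ b)%N.
  clearbody u v w; apply/negP; lia.
- exists (a + 1 - b)%N, q, 0%N; split; first exact: gensE3. move=> m.
  rewrite stdm_nf_add /std; case: (divmod_cases (m i1 + q)) => [[-> ->]|H].
    rewrite muln0; apply/negP; lia.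
  have : (b - 1 <= (b - 1) * ((m i1 + q) %/ b))%N by rewrite leq_pmulr.
  set u := ((b - 1) * _)%N; set v := (_ %% b)%N; set w := (_ %/ b)%N.
  clearbody u v w => Hu; apply/negP; lia.
- exists 0%N, q, (c - 1)%N; split; first exact: gensE4. move=> m.
  rewrite stdm_nf_add /std; case: (divmod_cases (m i1 + q)) => [[-> ->]|H].
    rewrite muln0; apply/negP; lia.
  move: H; set u := ((b - 1) * _)%N; set v := (_ %% b)%N; set w := (_ %/ b)%N.
  clearbody u v w => H; apply/negP; lia.
Qed.

Local Notation Lam := (Lam (K:=K) b).
Local Notation L := (xv + yv : R).

Definition alive (d w : nat) :=
  exists i j k, std i j k /\ (i + j + k = d)%N /\ (j + b * k = w)%N.

Lemma stdm_alive m : stdm m -> alive (mdeg m) (wt m).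
Proof. by move=> H; exists (m i0), (m i1), (m i2); rewrite mdeg3. Qed.

Lemma std_lt i j k : std i j k -> (j < b)%N.
Proof. by case/and5P. Qed.

Lemma mono_cases m :
  (stdm (nf m) /\ I (X m - X (nf m))) \/ (~ alive (mdeg m) (wt m) /\ I (X m)).
Proof.
case H: (stdm (nf m)); first by left; split => //; exact: nf_red.
right; split.
  move=> [i [j [k [Hs [Hd Hw]]]]].
  have E : nf m = mk i j k.
    apply: red_uniq; rewrite ?nf_small ?mkc1 ?(std_lt Hs) //.
      by rewrite mdeg_nf mdeg_mk.
    by rewrite wt_nf /wt mkc1 mkc2.
  by move: H; rewrite E /stdm mkc0 mkc1 mkc2 Hs.
have -> : X m = (X m - X (nf m)) + X (nf m) by rewrite subrK.
apply: in_idealD; first exact: nf_red.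
rewrite (mkE (nf m)); apply: nonstd_in; first exact: nf_small.
by move: H; rewrite /stdm => ->.
Qed.

Lemma dead_in m : ~ alive (mdeg m) (wt m) -> I (X m).
Proof.
case: (mono_cases m) => [[H _] Hd|[_ //]].
by case: Hd; rewrite -mdeg_nf -wt_nf; apply: stdm_alive.
Qed.

Lemma alive_rep s m : stdm s -> mdeg m = mdeg s -> wt m = wt s -> I (X m - X s).
Proof.
move=> Hs Hd Hw; case: (mono_cases m) => [[H1 H2]|[H _]].
  suff <- : nf m = s by [].
  apply: red_uniq; rewrite ?nf_small ?mdeg_nf ?wt_nf //.
  by case/and5P: Hs.
by case: H; rewrite Hd Hw; apply: stdm_alive.
Qed.

Lemma Lam_I d w f : alive d w -> I f -> Lam d w f = 0.
Proof.
move=> [i [j [k [Hs [Hd Hw]]]]] [g ->]; rewrite Lam_sum big1 // => l _.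
case: (eqVneq (val l) 1%N) => Hl.
  have -> : l = @Ordinal 5 1 isT by apply: val_inj.
  rewrite /Lam psiM gensE1 psiB !psiX !mdeg_mk /wt !mkc1 !mkc2.
  have -> : (0 + b + 0 = b - 1 + 0 + 1)%N by lia.
  have -> : (b + b * 0 = 0 + b * 1)%N by lia.
  by rewrite subrr mulr0 !coef0.
have [e0 [e1 [e2 [He Hn]]]] := nf_gen_nonstd Hl.
rewrite He {1}(mpolyE (g l)) mulr_suml Lam_sum big1 // => m _.
rewrite -scalerAl -mpolyXD LamZ LamX.
case: eqP => [Ed|]; last by rewrite mulr0.
case: eqP => [Ew|]; last by rewrite mulr0.
have E : nf (m + mk e0 e1 e2)%MM = mk i j k.
  apply: red_uniq; rewrite ?nf_small ?mkc1 ?(std_lt Hs) //.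
    by rewrite mdeg_nf mdeg_mk Ed Hd.
  by rewrite wt_nf Ew -Hw /wt mkc1 mkc2.
by move: (Hn m); rewrite E /stdm mkc0 mkc1 mkc2 Hs.
Qed.

Definition red (p : R) : R :=
  \sum_(m <- msupp p) p@_m *: (if stdm (nf m) then X (nf m) else 0).

Lemma red_I p : I (p - red p).
Proof.
rewrite {1}(mpolyE p) /red -sumrB; apply: in_ideal_sum => m.
rewrite -scalerBr; apply: in_idealZ.
case: (mono_cases m) => [[-> H]|[_ H]] //.
case Hn: (stdm (nf m)); first exact: nf_red.
rewrite subr0; case: (mono_cases m) => [[H' _]|[_ Hi]] //.
Qed.

Lemma mcoeff_sumX (p : R) s : \sum_(m <- msupp p) p@_m * (m == s)%:R = p@_s.
Proof.
rewrite {3}(mpolyE p) raddf_sum /=; apply: eq_bigr => m _.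
by rewrite mcoeffZ mcoeffX.
Qed.

Lemma red_coef p s :
  (red p)@_s = if stdm s then Lam (mdeg s) (wt s) p else 0.
Proof.
rewrite /red raddf_sum /=; case Hs: (stdm s).
  rewrite Lam_expand; apply: eq_bigr => m _; rewrite mcoeffZ; congr (_ * _).
  case Hn: (stdm (nf m)); rewrite ?mcoeffX ?mcoeff0.
    case: eqP => [<-|Hne]; first by rewrite mdeg_nf wt_nf !eqxx.
    case: eqP => [Ed|]; case: eqP => [Ew|] //=; case: Hne; apply: red_uniq.
    - exact: nf_small.
    - by case/and5P: Hs.
    - by rewrite mdeg_nf.
    - by rewrite wt_nf.
  case: eqP => [Ed|]; case: eqP => [Ew|] //=.
  have E : nf m = s.
    apply: red_uniq; rewrite ?nf_small ?mdeg_nf ?wt_nf //; by case/and5P: Hs.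
  by move: Hn; rewrite E Hs.
rewrite big1 // => m _; rewrite mcoeffZ.
case Hn: (stdm (nf m)); rewrite ?mcoeffX ?mcoeff0 ?mulr0 //.
by case: eqP => [E|]; rewrite ?mulr0 //; move: Hn; rewrite E Hs.
Qed.

Lemma red_supp p m : (red p)@_m != 0 -> stdm m.
Proof. by rewrite red_coef; case: (stdm m); rewrite ?eqxx. Qed.

Lemma Lam_std_supp (r : R) s : (forall m, r@_m != 0 -> stdm m) -> stdm s ->
  Lam (mdeg s) (wt s) r = r@_s.
Proof.
move=> Hr Hs; rewrite Lam_expand -mcoeff_sumX; apply: eq_bigr => m _.
case: (eqVneq r@_m 0) => [->|Hm]; first by rewrite !mul0r.
congr (_ * _); congr (_%:R).
case: (eqVneq m s) => [->|Hne]; first by rewrite !eqxx.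
case: eqP => [Ed|]; case: eqP => [Ew|] //=; rewrite ?(negbTE Hne) //.
case/eqP: Hne; apply: red_uniq => //.
- by case/and5P: (Hr _ Hm).
- by case/and5P: Hs.
Qed.

Lemma Lam_homog d d' w f : homogd d f -> d' != d -> Lam d' w f = 0.
Proof.
move=> Hf Hd; rewrite Lam_expand big_seq big1 // => m Hm.
by rewrite (dhomog_mf Hf Hm) eq_sym (negbTE Hd) mulr0.
Qed.

Lemma Lam_dead (r : R) d w : (forall m, r@_m != 0 -> stdm m) -> ~ alive d w ->
  Lam d w r = 0.
Proof.
move=> Hr Hd; rewrite Lam_expand big1 // => m _.
case: (eqVneq r@_m 0) => [->|Hm]; first by rewrite mul0r.
case: eqP => [Ed|]; case: eqP => [Ew|] //=; rewrite ?mulr0 //.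
by case: Hd; rewrite -Ed -Ew; apply: stdm_alive; apply: Hr.
Qed.

Lemma comb_inj (A A' : nat -> Prop) (Y : nat -> bool) (B : nat) (cf : nat -> K) :
  (forall w, ~ A w -> cf w = 0) ->
  (forall w, A' w -> cf w + (if w is w'.+1 then cf w' else 0) = 0) ->
  (forall w, A w -> (w < B)%N) ->
  (forall w, A w -> Y w -> A' w.+1 /\ (A w.+1 -> Y w.+1)) ->
  (forall w, A w -> ~~ Y w -> A' w /\ (forall w', w = w'.+1 -> A w' -> ~~ Y w')) ->
  forall w, cf w = 0.
Proof.
move=> Hdead Heq HB HY HX.
have C1 : forall w, A w -> ~~ Y w -> cf w = 0.
  elim=> [|w IH] Hw Hy.
    by have [H1 _] := HX _ Hw Hy; move: (Heq _ H1); rewrite addr0.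
  have [H1 H2] := HX _ Hw Hy; move: (Heq _ H1).
  have -> : cf w = 0.
    case: (classic (A w)) => Aw; last exact: Hdead.
    by apply: IH => //; apply: (H2 w).
  by rewrite addr0.
have C2 : forall n w, (B <= w + n)%N -> A w -> Y w -> cf w = 0.
  elim=> [|n IH] w Hn Hw Hy.
    by have := HB _ Hw; lia.
  have [H1 H2] := HY _ Hw Hy; move: (Heq _ H1).
  have -> : cf w.+1 = 0.
    case: (classic (A w.+1)) => Aw; last exact: Hdead.
    by apply: (IH w.+1) => //; [rewrite addSnnS | apply: H2].
  by rewrite add0r.
move=> w; case: (classic (A w)) => Aw; last exact: Hdead.
case Hy: (Y w); last by apply: C1 => //; rewrite Hy.
by apply: (C2 B w) => //; rewrite leq_addl.
Qed.

Lemma alive_bound d w : alive d w -> (w < b * c)%N.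
Proof.
move=> [i [j [k [Hs [_ <-]]]]]; case/and5P: Hs => _ Hj Hk _ _.
have : (b * k <= b * (c - 1))%N by rewrite leq_mul2l; apply/orP; right; lia.
have : (b * (c - 1) + b = b * c)%N by rewrite -mulnSr; congr (_ * _); lia.
lia.
Qed.

Lemma inj_core d (Y : nat -> bool) :
  (forall w, alive d w -> Y w -> alive d.+1 w.+1 /\ (alive d w.+1 -> Y w.+1)) ->
  (forall w, alive d w -> ~~ Y w ->
     alive d.+1 w /\ (forall w', w = w'.+1 -> alive d w' -> ~~ Y w')) ->
  mult_injective gens L d.
Proof.
move=> HY HX f Hf HLf.
set r := red f.
have Hr : forall m, r@_m != 0 -> stdm m by move=> m; apply: red_supp.
have HLr : I (L * r).
  have -> : L * r = L * f - L * (f - r) by ring.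
  by apply: in_idealB => //; apply: in_idealM; apply: red_I.
have Hc : forall w, Lam d w r = 0.
  apply: (@comb_inj (alive d) (alive d.+1) Y (b * c) (fun w => Lam d w r)).
  - by move=> w; apply: Lam_dead.
  - by move=> w Hw /=; rewrite -LamL; apply: Lam_I.
  - by move=> w; apply: alive_bound.
  - exact: HY.
  - exact: HX.
have r0 : r = 0.
  apply/mpolyP => s; rewrite mcoeff0.
  case Hs: (stdm s); last by rewrite red_coef Hs.
  case: (eqVneq (mdeg s) d) => [Ed|Nd].
    by rewrite -(Lam_std_supp Hr Hs) Ed Hc.
  by rewrite red_coef Hs (Lam_homog _ Hf Nd).
by have := red_I f; rewrite -/r r0 subr0.
Qed.

Definition good d (h : R) := exists2 f : R, homogd d f & I (h - L * f).

Lemma good_I d h : I h -> good d h.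
Proof. by move=> H; exists 0; [exact: dhomog0 | rewrite mulr0 subr0]. Qed.

Lemma good_add d h1 h2 : good d h1 -> good d h2 -> good d (h1 + h2).
Proof.
move=> [f1 H1 I1] [f2 H2 I2]; exists (f1 + f2); first exact: dhomogD.
have -> : h1 + h2 - L * (f1 + f2) = (h1 - L * f1) + (h2 - L * f2) by ring.
exact: in_idealD.
Qed.

Lemma good_scale d (c0 : K) h : good d h -> good d (c0 *: h).
Proof.
move=> [f1 H1 I1]; exists (c0 *: f1); first exact: dhomogZ.
by rewrite -scalerAr -scalerBr; apply: in_idealZ.
Qed.

Lemma good_equiv d h h' : I (h - h') -> good d h' -> good d h.
Proof.
move=> Hh [f1 H1 I1]; exists f1 => //.
have -> : h - L * f1 = (h - h') + (h' - L * f1) by ring.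
exact: in_idealD.
Qed.

Lemma good_opp d h : good d h -> good d (- h).
Proof. by move=> H; rewrite -scaleN1r; apply: good_scale. Qed.

Lemma good_sum d (s : seq 'X_{1..3}) (F : 'X_{1..3} -> R) :
  (forall m, m \in s -> good d (F m)) -> good d (\sum_(m <- s) F m).
Proof.
elim: s => [|m s IH] H; first by rewrite big_nil; apply: good_I; apply: in_ideal0.
rewrite big_cons; apply: good_add; first by apply: H; rewrite inE eqxx.
by apply: IH => m' Hm'; apply: H; rewrite inE Hm' orbT.
Qed.

Lemma I_sum_mem (s : seq 'X_{1..3}) (F : 'X_{1..3} -> R) :
  (forall m, m \in s -> I (F m)) -> I (\sum_(m <- s) F m).
Proof.
elim: s => [|m s IH] H; first by rewrite big_nil; apply: in_ideal0.
rewrite big_cons; apply: in_idealD; first by apply: H; rewrite inE eqxx.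
by apply: IH => m' Hm'; apply: H; rewrite inE Hm' orbT.
Qed.

Lemma good_L d f : homogd d f -> good d (L * f).
Proof. by move=> H; exists f => //; rewrite subrr; apply: in_ideal0. Qed.

Lemma homogX d m : mdeg m = d -> homogd d (X m).
Proof. by move=> H; rewrite /homogd dhomogX; apply/eqP. Qed.

Lemma L_mk i j k : L * X (mk i j k) = X (mk i.+1 j k) + X (mk i j.+1 k).
Proof. rewrite !Xmk !exprS /xv /yv; ring. Qed.

Lemma surj_core d (Z : nat -> bool) :
  (forall w, alive d.+1 w -> Z w -> alive d w /\ (alive d.+1 w.+1 -> Z w.+1)) ->
  (forall w, alive d.+1 w -> ~~ Z w ->
     exists w', w = w'.+1 /\ alive d w' /\ (alive d.+1 w' -> ~~ Z w')) ->
  mult_surjective gens L d.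
Proof.
move=> HZ HnZ.
have Hz : forall n w, (b * c <= w + n)%N -> Z w -> forall t, stdm t ->
    mdeg t = d.+1 -> wt t = w -> good d (X t).
  elim=> [|n IH] w Hn Hzw t Ht Hd Hw.
    have Aw := stdm_alive Ht; rewrite Hd Hw in Aw.
    by have := alive_bound Aw; lia.
  have Aw := stdm_alive Ht; rewrite Hd Hw in Aw.
  have [[i [j [k [Hs [Hsd Hsw]]]]] Hnext] := HZ _ Aw Hzw.
  have E1 : I (X (mk i.+1 j k) - X t).
    apply: alive_rep => //; first by rewrite mdeg_mk Hd; lia.
    by rewrite Hw /wt mkc1 mkc2; lia.
  have G2 : good d (X (mk i j.+1 k)).
    case: (classic (alive d.+1 w.+1)) => Aw1.
      have [i' [j' [k' [Hs' [Hd' Hw']]]]] := Aw1.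
      apply: (good_equiv (h' := X (mk i' j' k'))).
        apply: alive_rep; first by rewrite /stdm mkc0 mkc1 mkc2.
          by rewrite !mdeg_mk; lia.
        by rewrite /wt !mkc1 !mkc2; lia.
      apply: (IH w.+1); rewrite ?addSnnS ?mdeg_mk /wt ?mkc1 ?mkc2 //.
      - by apply: Hnext.
      - by rewrite /stdm mkc0 mkc1 mkc2.
    apply: good_I; apply: dead_in; rewrite mdeg_mk /wt mkc1 mkc2.
    have E3 : (i + j.+1 + k = d.+1)%N by lia.
    have E4 : (j.+1 + b * k = w.+1)%N by lia.
    by rewrite E3 E4.
  apply: (good_equiv (h' := L * X (mk i j k) - X (mk i j.+1 k))).
    have -> : X t - (L * X (mk i j k) - X (mk i j.+1 k)) = - (X (mk i.+1 j k) - X t).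
      by rewrite L_mk; ring.
    exact: in_idealN.
  apply: good_add; first by apply: good_L; apply: homogX; rewrite mdeg_mk.
  exact: good_opp.
have Hnz : forall w, ~~ Z w -> forall t, stdm t ->
    mdeg t = d.+1 -> wt t = w -> good d (X t).
  elim=> [|w IH] Hzw t Ht Hd Hw.
  - have Aw := stdm_alive Ht; rewrite Hd Hw in Aw.
    by have [w' [//]] := HnZ _ Aw Hzw.
  have Aw := stdm_alive Ht; rewrite Hd Hw in Aw.
  have [w' [[<-] [[i [j [k [Hs [Hsd Hsw]]]]] Hprev]]] := HnZ _ Aw Hzw.
  have E1 : I (X (mk i j.+1 k) - X t).
    apply: alive_rep => //; first by rewrite mdeg_mk Hd; lia.
    by rewrite Hw /wt mkc1 mkc2; lia.
  have G2 : good d (X (mk i.+1 j k)).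
    case: (classic (alive d.+1 w)) => Aw1.
      have [i' [j' [k' [Hs' [Hd' Hw']]]]] := Aw1.
      apply: (good_equiv (h' := X (mk i' j' k'))).
        apply: alive_rep; first by rewrite /stdm mkc0 mkc1 mkc2.
          by rewrite !mdeg_mk; lia.
        by rewrite /wt !mkc1 !mkc2; lia.
      apply: IH; rewrite ?mdeg_mk /wt ?mkc1 ?mkc2 //.
      - by apply: Hprev.
      - by rewrite /stdm mkc0 mkc1 mkc2.
    apply: good_I; apply: dead_in; rewrite mdeg_mk /wt mkc1 mkc2.
    have E3 : (i.+1 + j + k = d.+1)%N by lia.
    by rewrite E3 Hsw.
  apply: (good_equiv (h' := L * X (mk i j k) - X (mk i.+1 j k))).
    have -> : X t - (L * X (mk i j k) - X (mk i.+1 j k)) = - (X (mk i j.+1 k) - X t).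
      by rewrite L_mk; ring.
    exact: in_idealN.
  apply: good_add; first by apply: good_L; apply: homogX; rewrite mdeg_mk.
  exact: good_opp.
have Hall : forall t, stdm t -> mdeg t = d.+1 -> good d (X t).
  move=> t Ht Hd; case Hzt: (Z (wt t)).
    by apply: (Hz (b * c) (wt t)) => //; rewrite leq_addl.
  by apply: (Hnz (wt t)) => //; rewrite Hzt.
move=> h Hh; rewrite (mpolyE h); apply: good_sum => m Hm; apply: good_scale.
have Hdm : mdeg m = d.+1 by apply: (dhomog_mf Hh Hm).
case: (mono_cases m) => [[Hs Hi]|[_ Hi]]; last exact: good_I.
by apply: (good_equiv Hi); apply: Hall => //; rewrite mdeg_nf.
Qed.

Lemma artin : quotient_artinian gens.
Proof.
exists (a + b + c)%N => d Hd f Hf; rewrite (mpolyE f).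
apply: I_sum_mem => m Hm; apply: in_idealZ.
have Hdm : mdeg m = d by apply: (dhomog_mf Hf Hm).
case: (mono_cases m) => [[Hs _]|[_ Hi]] //.
move: Hs; rewrite /stdm /std => /and5P [H1 H2 H3 _ _].
by move: (mdeg_nf m); rewrite Hdm mdeg3; lia.
Qed.

Lemma homogL : homogd 1 L.
Proof.
have H0 : ('X_[U_(0 : 'I_3)] : R) \is 1.-homog by rewrite dhomogX; apply/eqP; exact: mdeg1.
have H1 : ('X_[U_(1 : 'I_3)] : R) \is 1.-homog by rewrite dhomogX; apply/eqP; exact: mdeg1.
exact: dhomogD.
Qed.

End Params.

Local Close Scope ring_scope.

Section FamB.
Variables (a c : nat).
Hypotheses (c2 : (2 <= c)%N) (ca : (c <= a)%N).

Lemma famB_HX d : (d <= a - 2)%N -> forall w, alive a 2 c 1 d w -> ~~ false ->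
  alive a 2 c 1 d.+1 w /\ (forall w', w = w'.+1 -> alive a 2 c 1 d w' -> ~~ false).
Proof.
move=> Hd w [i [j [k [Hs [H1 H2]]]]] _; split => //.
exists i.+1, j, k; split; last by lia.
move: Hs; rewrite /std; lia.
Qed.

Lemma famB_HZ d : (a - 1 <= d)%N -> forall w, alive a 2 c 1 d.+1 w -> true ->
  alive a 2 c 1 d w /\ (alive a 2 c 1 d.+1 w.+1 -> true).
Proof.
move=> Hd w [i [j [k [Hs [H1 H2]]]]] _; split => //.
exists i.-1, j, k; move: Hs; rewrite /std => Hs; split; last by lia.
lia.
Qed.

End FamB.

Ltac kcase k b :=
  let Hk := fresh "Hk" in
  (have Hk : (k = 0 \/ k = 1)%N by lia);
  destruct Hk as [Hk|Hk]; subst k.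

Section FamC.
Variables (a b beta : nat).
Hypotheses (b2 : (2 <= b)%N) (ba : (b <= a)%N) (be1 : (1 <= beta)%N) (beb : (beta < b)%N).

Definition Yc d w := [&& (w < b)%N, (d - w < a + 1 - b)%N & (a + 1 - b - 1 + (b - beta) <= d)%N].
Definition Zc D w := ~~ [&& (w < b)%N, (D - w < a + 1 - b)%N & (D <= b - 1)%N].

Local Notation al := (alive a b 2 beta).

Lemma famC_HY d : (d.*2 + 2 <= a + (b - beta))%N ->
  forall w, al d w -> Yc d w -> al d.+1 w.+1 /\ (al d w.+1 -> Yc d w.+1).
Proof.
move=> Hd w [i [j [k [Hs [H1 H2]]]]] Hy; move: Hs Hy; rewrite /std /Yc => Hs Hy.
have Hk : (k < 2)%N by lia.
kcase k b; last by lia.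
split.
  by exists i, j.+1, 0%N; rewrite /std; lia.
move=> [i' [j' [k' [Hs' [H1' H2']]]]]; move: Hs'; rewrite /std => Hs'.
have Hk' : (k' < 2)%N by lia.
kcase k' b; lia.
Qed.

Lemma famC_HX d : (d.*2 + 2 <= a + (b - beta))%N ->
  forall w, al d w -> ~~ Yc d w ->
  al d.+1 w /\ (forall w', w = w'.+1 -> al d w' -> ~~ Yc d w').
Proof.
move=> Hd w [i [j [k [Hs [H1 H2]]]]] Hy; move: Hs Hy; rewrite /std /Yc => Hs Hy.
have Hk : (k < 2)%N by lia.
split.
  by exists i.+1, j, k; rewrite /std; kcase k b; lia.
move=> w' Ew [i' [j' [k' [Hs' [H1' H2']]]]]; move: Hs'; rewrite /std => Hs'.
have Hk' : (k' < 2)%N by lia.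
kcase k b; kcase k' b; lia.
Qed.

Lemma famC_HZ d : (a + (b - beta) < d.*2 + 2)%N ->
  forall w, al d.+1 w -> Zc d.+1 w -> al d w /\ (al d.+1 w.+1 -> Zc d.+1 w.+1).
Proof.
move=> Hd w [i [j [k [Hs [H1 H2]]]]] Hz; move: Hs Hz; rewrite /std /Zc => Hs Hz.
have Hk : (k < 2)%N by lia.
split.
  by exists i.-1, j, k; rewrite /std; kcase k b; lia.
move=> [i' [j' [k' [Hs' [H1' H2']]]]]; move: Hs'; rewrite /std => Hs'.
have Hk' : (k' < 2)%N by lia.
kcase k b; kcase k' b; lia.
Qed.

Lemma famC_HnZ d : (a + (b - beta) < d.*2 + 2)%N ->
  forall w, al d.+1 w -> ~~ Zc d.+1 w ->
  exists w', w = w'.+1 /\ al d w' /\ (al d.+1 w' -> ~~ Zc d.+1 w').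
Proof.
move=> Hd w [i [j [k [Hs [H1 H2]]]]] Hz; move: Hs Hz; rewrite /std /Zc negbK => Hs Hz.
have Hk : (k < 2)%N by lia.
kcase k b; last by lia.
exists j.-1; split; first by lia.
split.
  by exists i, j.-1, 0%N; rewrite /std; lia.
move=> [i' [j' [k' [Hs' [H1' H2']]]]]; move: Hs'; rewrite /std => Hs'.
have Hk' : (k' < 2)%N by lia.
rewrite negbK; kcase k' b; lia.
Qed.

End FamC.

Local Open Scope ring_scope.
Unset Implicit Arguments.

Theorem corollary3p8 (K : fieldType) (a b c beta gamma : nat) :
  [pchar K] =i pred0 ->
  (c <= a)%N -> (2 <= c)%N ->
  (1 <= beta)%N -> (beta + 1 <= b)%N ->
  (1 <= gamma)%N -> (b + 1 <= a + gamma)%N ->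
  (gamma + 1 <= b)%N -> (gamma + 1 <= c)%N ->
  (a = 2 \/ b = 2 \/ c = 2)%N ->
  hasWLP (gensI K a b c beta gamma).
Proof.
move=> _ Hca Hc2 Hbe1 Hbeb Hg1 Hbag Hgb Hgc Hcase.
have Hg : gamma = 1%N by lia.
subst gamma.
have Hb0 : (0 < b)%N by lia.
have Hba : (b <= a + 1)%N by lia.
have Hc0 : (0 < c)%N by lia.
split; first exact: artin.
exists (xv + yv); split; first exact: homogL.
move=> d.
have [Hb2|Hc2'] : (b = 2 \/ c = 2)%N by lia.
- subst b.
  have Hbe : beta = 1%N by lia.
  subst beta.
  case: (leqP d (a - 2)) => Hd.
    left; apply: (@inj_core K a 2 c 1 Hb0 Hba Hc0 d (fun _ => false)) => //.
    exact: famB_HX.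
  right; apply: (@surj_core K a 2 c 1 Hb0 Hba Hc0 d (fun _ => true)) => //.
  by apply: famB_HZ => //; lia.
- subst c.
  case: (leqP (d.*2 + 2) (a + (b - beta))) => Hd.
    left; apply: (@inj_core K a b 2 beta Hb0 Hba Hc0 d (Yc a b beta d)).
      by apply: famC_HY => //; lia.
    by apply: famC_HX => //; lia.
  right; refine (@surj_core K a b 2 beta Hb0 Hba Hc0 d (Zc a b d.+1) _ _).
    by apply: famC_HZ => //; lia.
  by apply: famC_HnZ => //; lia.
Qed.
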